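(* Let $X$ be a real Hilbert space, $f,g:X\to\mathbb{R}\cup\{+\infty\}$ proper $\Phi_{lsc}$-convex functions, $\alpha\in\mathbb{R}$ and $\varepsilon\ge0$. Let $\bar x\in\mathrm{dom}(f)\cap\mathrm{dom}(g)$ with $f(\bar x)\ge\alpha$ and $g(\bar x)\ge\alpha$. If $f$ and $g$ satisfy the zero subgradient condition $ZS(\varepsilon,\bar x)$, i.e. $0\in\mathrm{co}\big(\partial^\varepsilon_{lsc}f(\bar x)\cup\partial^\varepsilon_{lsc}g(\bar x)\big)$, then there exist $\varphi_1\in\mathrm{supp}(f)$ and $\varphi_2\in\mathrm{supp}(g)$ such that $\{x:\varphi_1(x)<\alpha-\varepsilon\}\cap\{x:\varphi_2(x)<\alpha-\varepsilon\}=\emptyset$.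
   Context: $\Phi_{lsc}$ is the class of functions $\varphi(x)=-a\|x\|^2+\langle v,x\rangle+c$ ($a\ge0$, $v\in X^*$, $c\in\mathbb{R}$); $\mathrm{supp}(f)=\{\varphi\in\Phi_{lsc}:\varphi\le f\}$; $f$ is $\Phi_{lsc}$-convex if $f=\sup\mathrm{supp}(f)$ pointwise; proper means $\mathrm{supp}(f)\ne\emptyset$ and $\mathrm{dom}(f)\ne\emptyset$. For $\varepsilon\ge0$, $\partial^\varepsilon_{lsc}f(\bar x)$ is the set of $(a,v)\in\mathbb{R}_+\times X^*$ with $f(x)-f(\bar x)\ge\langle v,x-\bar x\rangle-a\|x\|^2+a\|\bar x\|^2-\varepsilon$ for all $x\in X$; this is a subset of the vector space $\mathbb{R}\times X^*$, $\mathrm{co}$ denotes convex hull there, and $0$ means $(0,0)$. For $x_1\in\mathrm{dom}(f)$, $x_2\in\mathrm{dom}(g)$, $f,g$ satisfy $ZS(\varepsilon,x_1,x_2)$ if $0\in\mathrm{co}(\partial^\varepsilon_{lsc}f(x_1)\cup\partial^\varepsilon_{lsc}g(x_2))$; $ZS(\varepsilon,\bar x)$ means $ZS(\varepsilon,\bar x,\bar x)$. *)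

(* Defs.v *)
From Stdlib Require Import Reals List.
Open Scope R_scope.
Set Implicit Arguments.

Record HilbertSpace := {
  hs_car :> Type;
  hs_zero : hs_car;
  hs_add : hs_car -> hs_car -> hs_car;
  hs_opp : hs_car -> hs_car;
  hs_scal : R -> hs_car -> hs_car;
  hs_inner : hs_car -> hs_car -> R;
  hs_addA : forall x y z, hs_add x (hs_add y z) = hs_add (hs_add x y) z;
  hs_addC : forall x y, hs_add x y = hs_add y x;
  hs_add0 : forall x, hs_add x hs_zero = x;
  hs_addN : forall x, hs_add x (hs_opp x) = hs_zero;
  hs_scal1 : forall x, hs_scal 1 x = x;
  hs_scalA : forall a b x, hs_scal a (hs_scal b x) = hs_scal (a * b) x;
  hs_scalDr : forall a x y, hs_scal a (hs_add x y) = hs_add (hs_scal a x) (hs_scal a y);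
  hs_scalDl : forall a b x, hs_scal (a + b) x = hs_add (hs_scal a x) (hs_scal b x);
  hs_innerC : forall x y, hs_inner x y = hs_inner y x;
  hs_innerDl : forall x y z, hs_inner (hs_add x y) z = hs_inner x z + hs_inner y z;
  hs_innerZl : forall a x y, hs_inner (hs_scal a x) y = a * hs_inner x y;
  hs_inner_pos : forall x, 0 <= hs_inner x x;
  hs_inner_def : forall x, hs_inner x x = 0 -> x = hs_zero;
  hs_complete : forall u : nat -> hs_car,
    (forall eps, 0 < eps -> exists N, forall m n, (N <= m)%nat -> (N <= n)%nat ->
        sqrt (hs_inner (hs_add (u m) (hs_opp (u n))) (hs_add (u m) (hs_opp (u n)))) < eps) ->
    exists l, forall eps, 0 < eps -> exists N, forall n, (N <= n)%nat ->
        sqrt (hs_inner (hs_add (u n) (hs_opp l)) (hs_add (u n) (hs_opp l))) < eps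
}.

Arguments hs_zero {h}. Arguments hs_add {h}. Arguments hs_opp {h}.
Arguments hs_scal {h}. Arguments hs_inner {h}.

Inductive ERbar := Fin (r : R) | PInf.

Definition ERle (a b : ERbar) : Prop :=
  match a, b with
  | _, PInf => True
  | PInf, Fin _ => False
  | Fin r, Fin s => r <= s
  end.

Definition RltER (r : R) (b : ERbar) : Prop :=
  match b with Fin s => r < s | PInf => True end.

Section Phi.
Context {X : HilbertSpace}.

Definition nsq (x : X) : R := hs_inner x x.

(** φ(x) = -a‖x‖² + ⟨v,x⟩ + c ; X* identified with X via Riesz. *)
Definition phi (a : R) (v : X) (c : R) (x : X) : R := - a * nsq x + hs_inner v x + c.

(** (a,v,c) with a >= 0 represents an element of Φ_lsc lying in supp(f) *)
Definition in_supp (f : X -> ERbar) (a : R) (v : X) (c : R) : Prop :=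
  0 <= a /\ forall x, ERle (Fin (phi a v c x)) (f x).

Definition in_dom (f : X -> ERbar) (x : X) : Prop := exists r, f x = Fin r.

Definition proper (f : X -> ERbar) : Prop :=
  (exists a v c, in_supp f a v c) /\ (exists x, in_dom f x).

(** f = sup supp(f) pointwise (the inequality sup <= f is built into supp). *)
Definition Phi_convex (f : X -> ERbar) : Prop :=
  forall x r, RltER r (f x) -> exists a v c, in_supp f a v c /\ r < phi a v c x.

(** (a,v) ∈ ∂^ε_lsc f(xbar) ; only meaningful for xbar ∈ dom f. *)
Definition eps_subdiff (f : X -> ERbar) (eps : R) (xbar : X) (a : R) (v : X) : Prop :=
  match f xbar with
  | Fin fb => 0 <= a /\ forall x,
      ERle (Fin (fb + hs_inner v (hs_add x (hs_opp xbar)) - a * nsq x + a * nsq xbar - eps)) (f x)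
  | PInf => False
  end.

Fixpoint wsum (l : list (R * (R * X))) : R * X :=
  match l with
  | nil => (0, hs_zero)
  | (lam, (a, v)) :: t =>
      let (s, w) := wsum t in (lam * a + s, hs_add (hs_scal lam v) w)
  end.

Definition in_co (S : R -> X -> Prop) (p : R * X) : Prop :=
  exists l : list (R * (R * X)),
    (forall lam a v, In (lam, (a, v)) l -> 0 <= lam /\ S a v) /\
    fold_right (fun e s => fst e + s) 0 l = 1 /\
    wsum l = p.

Definition ZS (f g : X -> ERbar) (eps : R) (x1 x2 : X) : Prop :=
  in_co (fun a v => eps_subdiff f eps x1 a v \/ eps_subdiff g eps x2 a v) (0, hs_zero).

End Phi.

(* Main.v *)
Require Import Defs.
From Stdlib Require Import Reals List Lra.
Open Scope R_scope.

Section Aux.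
Variable X : HilbertSpace.

Lemma scal0 (x : X) : hs_scal 0 x = hs_zero.
Proof.
  set (s := hs_scal 0 x).
  assert (E : s = hs_add s s) by (unfold s; rewrite <- hs_scalDl; f_equal; lra).
  assert (E2 : hs_add (hs_add s s) (hs_opp s) = hs_zero) by (rewrite <- E; apply hs_addN).
  rewrite <- hs_addA, hs_addN, hs_add0 in E2. exact E2.
Qed.

Lemma inner0 (y : X) : hs_inner hs_zero y = 0.
Proof. rewrite <- (scal0 hs_zero), hs_innerZl. ring. Qed.

Lemma innerN (y z : X) : hs_inner (hs_opp y) z = - hs_inner y z.
Proof.
  assert (H := hs_innerDl X y (hs_opp y) z). rewrite hs_addN, inner0 in H. lra.
Qed.

Lemma innerDiff (v x y : X) : hs_inner v (hs_add x (hs_opp y)) = hs_inner v x - hs_inner v y.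
Proof. rewrite hs_innerC, hs_innerDl, innerN, (hs_innerC X x), (hs_innerC X y). ring. Qed.

Definition Pf (f : X -> ERbar) (fb eps : R) (xbar : X) (lam A : R) (V : X) : Prop :=
  0 <= A /\ (lam = 0 -> A = 0 /\ V = hs_zero) /\
  forall x r, f x = Fin r ->
    lam * (fb - eps) + hs_inner V (hs_add x (hs_opp xbar)) - A * nsq x + A * nsq xbar <= lam * r.

Lemma Pf_nil f fb eps xbar : Pf f fb eps xbar 0 0 hs_zero.
Proof.
  split; [lra|split; [auto|]]. intros x r _. rewrite inner0. lra.
Qed.

Lemma Pf_cons f fb eps xbar lam A V l a v :
  f xbar = Fin fb -> 0 <= l -> eps_subdiff f eps xbar a v ->
  0 <= lam -> Pf f fb eps xbar lam A V ->
  Pf f fb eps xbar (l + lam) (l * a + A) (hs_add (hs_scal l v) V).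
Proof.
  intros Hfb Hl Hs Hlam [HA [H0 HI]]. unfold eps_subdiff in Hs. rewrite Hfb in Hs.
  destruct Hs as [Ha Hs]. split; [|split].
  - nra.
  - intros E. assert (l = 0) by lra. assert (E2 : lam = 0) by lra. subst l.
    destruct (H0 E2) as [-> ->]. rewrite scal0, hs_add0. split; [ring|auto].
  - intros x r Hr. specialize (HI x r Hr). specialize (Hs x). rewrite Hr in Hs.
    simpl in Hs. rewrite hs_innerDl, hs_innerZl.
    assert (H' := Rmult_le_compat_l l _ _ Hl Hs).
    set (d := hs_inner v (hs_add x (hs_opp xbar))) in *.
    set (e := hs_inner V (hs_add x (hs_opp xbar))) in *.
    set (n1 := nsq x) in *. set (n2 := nsq xbar) in *.
    replace (l * r) with (l * r) in H' by ring.
    assert (l * (fb + d - a * n1 + a * n2 - eps) = l*fb + l*d - l*a*n1 + l*a*n2 - l*eps) by ring.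
    assert ((l + lam) * (fb - eps) + (l * d + e) - (l * a + A) * n1 + (l * a + A) * n2
            = (l*fb + l*d - l*a*n1 + l*a*n2 - l*eps) + (lam * (fb - eps) + e - A * n1 + A * n2)) by ring.
    assert ((l + lam) * r = l*r + lam*r) by ring.
    lra.
Qed.

Lemma decomp f g eps xbar fb gb (l : list (R * (R * X))) :
  f xbar = Fin fb -> g xbar = Fin gb ->
  (forall lam a v, In (lam, (a, v)) l -> 0 <= lam /\
     (eps_subdiff f eps xbar a v \/ eps_subdiff g eps xbar a v)) ->
  exists lam mu Fa Fv Ga Gv, 0 <= lam /\ 0 <= mu /\
    Pf f fb eps xbar lam Fa Fv /\ Pf g gb eps xbar mu Ga Gv /\
    fold_right (fun e s => fst e + s) 0 l = lam + mu /\
    wsum l = (Fa + Ga, hs_add Fv Gv).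
Proof.
  intros Hf Hg. induction l as [|[l0 [a v]] t IH]; intros Hin.
  - exists 0, 0, 0, hs_zero, 0, hs_zero.
    repeat split; try lra; try apply Pf_nil.
    all: simpl; try lra. rewrite (hs_add0 X). f_equal; ring.
  - destruct IH as [lam [mu [Fa [Fv [Ga [Gv [Hl [Hm [PF [PG [Hs Hw]]]]]]]]]]].
    { intros; apply (Hin lam a0 v0); right; auto. }
    destruct (Hin l0 a v (or_introl eq_refl)) as [Hl0 [Hsf|Hsg]].
    + exists (l0 + lam), mu, (l0 * a + Fa), (hs_add (hs_scal l0 v) Fv), Ga, Gv.
      split; [lra|]. split; [lra|]. split; [apply Pf_cons; auto|]. split; [auto|].
      split; [simpl; rewrite Hs; ring|].
      simpl. rewrite Hw. rewrite hs_addA. f_equal; ring.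
    + exists lam, (l0 + mu), Fa, Fv, (l0 * a + Ga), (hs_add (hs_scal l0 v) Gv).
      split; [lra|]. split; [lra|]. split; [auto|]. split; [apply Pf_cons; auto|].
      split; [simpl; rewrite Hs; ring|].
      simpl. rewrite Hw. rewrite hs_addA, (hs_addC X (hs_scal l0 v) Fv), <- hs_addA.
      f_equal; ring.
Qed.

End Aux.

Lemma supp_const (X : HilbertSpace) (f : X -> ERbar) fb eps xbar V :
  f xbar = Fin fb -> Pf X f fb eps xbar 1 0 V ->
  (forall y, hs_inner V y = 0) -> in_supp f 0 hs_zero (fb - eps).
Proof.
  intros Hfb [_ [_ HI]] HV. split; [lra|]. intros x. unfold ERle.
  destruct (f x) as [r|] eqn:E; auto. specialize (HI x r E). rewrite HV in HI.
  unfold phi. rewrite inner0. lra.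
Qed.

Lemma supp_div (X : HilbertSpace) (f : X -> ERbar) fb eps xbar lam V :
  f xbar = Fin fb -> 0 < lam -> Pf X f fb eps xbar lam 0 V ->
  in_supp f 0 (hs_scal (/ lam) V) (fb - eps - / lam * hs_inner V xbar).
Proof.
  intros Hfb Hl [_ [_ HI]]. split; [lra|]. intros x. unfold ERle.
  destruct (f x) as [r|] eqn:E; auto. specialize (HI x r E). rewrite innerDiff in HI.
  unfold phi. rewrite hs_innerZl.
  set (p := hs_inner V x) in *. set (q := hs_inner V xbar) in *.
  assert (H' : / lam * (lam * (fb - eps) + (p - q) - 0 * nsq x + 0 * nsq xbar) <= / lam * (lam * r)).
  { apply Rmult_le_compat_l; [left; apply Rinv_0_lt_compat; lra | exact HI]. }
  replace (/ lam * (lam * r)) with r in H' by (field; lra).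
  replace (/ lam * (lam * (fb - eps) + (p - q) - 0 * nsq x + 0 * nsq xbar))
    with (fb - eps + / lam * p - / lam * q) in H' by (field; lra).
  lra.
Qed.

Theorem mainTheorem11 (X : HilbertSpace) (f g : X -> ERbar) (alpha eps : R) (xbar : X) :
  proper f -> proper g -> Phi_convex f -> Phi_convex g ->
  0 <= eps ->
  in_dom f xbar -> in_dom g xbar ->
  ERle (Fin alpha) (f xbar) -> ERle (Fin alpha) (g xbar) ->
  ZS f g eps xbar xbar ->
  exists (a1 : R) (v1 : X) (c1 : R) (a2 : R) (v2 : X) (c2 : R),
    in_supp f a1 v1 c1 /\ in_supp g a2 v2 c2 /\
    (forall x : X, ~ (phi a1 v1 c1 x < alpha - eps /\ phi a2 v2 c2 x < alpha - eps)).
Proof.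
  intros [[af [vf [cf Hsf]]] _] [[ag [vg [cg Hsg]]] _] _ _ Heps [fb Hfb] [gb Hgb] Haf Hag
    [l [Hin [Hsum Hw]]].
  rewrite Hfb in Haf. rewrite Hgb in Hag. simpl in Haf, Hag.
  destruct (decomp X f g eps xbar fb gb l Hfb Hgb Hin) as [lam [mu [Fa [Fv [Ga [Gv [Hl [Hm [PF [PG [Hs Hw']]]]]]]]]]].
  rewrite Hw' in Hw. injection Hw as HA HV.
  assert (HFa : Fa = 0) by (destruct PF; destruct PG; lra).
  assert (HGa : Ga = 0) by (destruct PF; destruct PG; lra).
  subst Fa Ga.
  assert (HG : forall y, hs_inner Gv y = - hs_inner Fv y).
  { intros y. assert (H := hs_innerDl X Fv Gv y). rewrite HV, inner0 in H. lra. }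
  destruct (Req_dec lam 0) as [E0|N0].
  - subst lam. assert (mu = 1) by lra. subst mu.
    destruct PF as [_ [HZ _]]. destruct (HZ eq_refl) as [_ HF0].
    assert (HG0 : forall y, hs_inner Gv y = 0) by (intros; rewrite HG, HF0, inner0; ring).
    exists af, vf, cf, 0, hs_zero, (gb - eps).
    split; [auto|]. split; [eapply supp_const; eauto|].
    intros x [_ H2]. unfold phi in H2. rewrite inner0 in H2. lra.
  - destruct (Req_dec mu 0) as [E1|N1].
    + subst mu. assert (lam = 1) by lra. subst lam.
      assert (HF0 : forall y, hs_inner Fv y = 0).
      { destruct PG as [_ [HZ _]]. destruct (HZ eq_refl) as [_ HG0].
        intros y. assert (H := HG y). rewrite HG0, inner0 in H. lra. }
      exists 0, hs_zero, (fb - eps), ag, vg, cg.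
      split; [eapply supp_const; eauto|]. split; [auto|].
      intros x [H1 _]. unfold phi in H1. rewrite inner0 in H1. lra.
    + assert (Hl' : 0 < lam) by lra. assert (Hm' : 0 < mu) by lra.
      exists 0, (hs_scal (/ lam) Fv), (fb - eps - / lam * hs_inner Fv xbar),
             0, (hs_scal (/ mu) Gv), (gb - eps - / mu * hs_inner Gv xbar).
      split; [eapply supp_div; eauto|]. split; [eapply supp_div; eauto|].
      intros x [H1 H2]. unfold phi in H1, H2. rewrite hs_innerZl in H1, H2.
      rewrite !HG in H2.
      set (t := hs_inner Fv x - hs_inner Fv xbar).
      assert (T1 : / lam * t < 0) by (unfold t; lra).
      assert (T2 : / mu * (- t) < 0) by (unfold t; lra).
      assert (0 < / lam) by (apply Rinv_0_lt_compat; lra).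
      assert (0 < / mu) by (apply Rinv_0_lt_compat; lra).
      nra.
Qed.
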